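(* Let $T$ be a complete theory, $\varphi(x;y)$ a formula with characteristic sequence $\langle P_n:n<\omega\rangle$. Suppose there exists $\delta$ with $0<\delta<1$ such that for all $0<\epsilon<1$ and all $N\in\mathbb{N}$ there exist disjoint finite subsets $X_N,Y_N\subseteq P_1$ with $|X_N|=|Y_N|\geq N$ such that $(X_N,Y_N)$ is $\epsilon$-regular with density $\delta$ (with respect to the edge relation $P_2$). Then $P_1$ contains an infinite empty pair.
   Context: The characteristic sequence: $P_n(y_1,\dots,y_n):=\exists x\bigwedge_{i\le n}\varphi(x;y_i)$, interpreted in a sufficiently saturated model of $T$; standing assumption $T\vdash\forall y\exists z\forall x(\varphi(x;z)\leftrightarrow\neg\varphi(x;y))$. For finite disjoint $X,Y$, $e(X,Y)$ is the number of pairs $(x,y)\in X\times Y$ with $P_2(x,y)$, and the density is $\delta(X,Y)=e(X,Y)/|X||Y|$ (and $0$ if one is empty). $(X,Y)$ is $\epsilon$-regular if for all $X'\subseteq X$, $Y'\subseteq Y$ with $|X'|\ge\epsilon|X|$, $|Y'|\ge\epsilon|Y|$, $|\delta(X,Y)-\delta(X',Y')|<\epsilon$. An infinite empty pair in $P_1$ is a pair $(X,Y)$ of subsets of $P_1$ with $|X|=|Y|\ge\aleph_0$ and $\neg P_2(x,y)$ for all $x\in X,y\in Y$. *)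

(* Defs.v *)
From Stdlib Require Import Reals List Lra ClassicalEpsilon.
From Stdlib Require Vectors.Fin.
Import ListNotations.
Set Implicit Arguments.
Open Scope R_scope.

Record signature := Signature {
  Fn : Type; fn_ar : Fn -> nat;   (* function symbols (constants: arity 0) *)
  Rl : Type; rl_ar : Rl -> nat }.

Section Syntax.
Variable L : signature.

Inductive term : Type :=
  | tvar (n : nat)
  | tapp (f : Fn L) (args : Fin.t (fn_ar L f) -> term).

Inductive formula : Type :=
  | fFalse
  | fEq (t1 t2 : term)
  | fRel (r : Rl L) (args : Fin.t (rl_ar L r) -> term)
  | fNot (p : formula)
  | fAnd (p q : formula)
  | fOr (p q : formula)
  | fImp (p q : formula)
  | fEx (n : nat) (p : formula)
  | fAll (n : nat) (p : formula).

Fixpoint term_free (n : nat) (t : term) : Prop :=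
  match t with
  | tvar k => k = n
  | tapp f args => exists i, term_free n (args i)
  end.

Fixpoint free (n : nat) (p : formula) : Prop :=
  match p with
  | fFalse => False
  | fEq t1 t2 => term_free n t1 \/ term_free n t2
  | fRel r args => exists i, term_free n (args i)
  | fNot p => free n p
  | fAnd p q | fOr p q | fImp p q => free n p \/ free n q
  | fEx k p | fAll k p => k <> n /\ free n p
  end.

Definition sentence (p : formula) : Prop := forall n, ~ free n p.

Definition formula_in (p : formula) (k : nat) : Prop :=
  forall n, free n p -> (n < k)%nat.

Record structure := Structure {
  carrier : Type;
  witness : carrier;  (* structures are nonempty *)
  interp_fn : forall f : Fn L, (Fin.t (fn_ar L f) -> carrier) -> carrier;
  interp_rl : forall r : Rl L, (Fin.t (rl_ar L r) -> carrier) -> Prop }.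

Fixpoint eval (M : structure) (s : nat -> carrier M) (t : term) : carrier M :=
  match t with
  | tvar n => s n
  | tapp f args => interp_fn M f (fun i => eval M s (args i))
  end.

Definition update (A : Type) (s : nat -> A) (n : nat) (a : A) : nat -> A :=
  fun k => if Nat.eqb k n then a else s k.

Fixpoint sat (M : structure) (s : nat -> carrier M) (p : formula) : Prop :=
  match p with
  | fFalse => False
  | fEq t1 t2 => eval M s t1 = eval M s t2
  | fRel r args => interp_rl M r (fun i => eval M s (args i))
  | fNot p => ~ sat M s p
  | fAnd p q => sat M s p /\ sat M s q
  | fOr p q => sat M s p \/ sat M s q
  | fImp p q => sat M s p -> sat M s q
  | fEx k p => exists a, sat M (update s k a) p
  | fAll k p => forall a, sat M (update s k a) p
  end.

Definition theory := formula -> Prop.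

Definition is_model (M : structure) (T : theory) : Prop :=
  forall p, T p -> forall s, sat M s p.

(** A complete theory: a consistent set of sentences deciding every sentence
    (T |- sigma is taken semantically, i.e. truth in all models of T). *)
Definition complete (T : theory) : Prop :=
  (forall p, T p -> sentence p) /\
  (exists M : structure, is_model M T) /\
  (forall sigma, sentence sigma ->
     (forall M : structure, is_model M T -> forall s, sat M s sigma) \/
     (forall M : structure, is_model M T -> forall s, sat M s (fNot sigma))).

(** aleph_1-saturation: every set of formulas in the free variable 0 with
    parameters from a countable set (the range of [sigma]), finitely
    satisfiable in M, is realized in M. *)
Definition aleph1_saturated (M : structure) : Prop :=
  forall (sigma : nat -> carrier M) (P : formula -> Prop),
    (forall l : list formula, (forall p, In p l -> P p) ->
       exists a, forall p, In p l -> sat M (update sigma 0 a) p) ->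
    exists a, forall p, P p -> sat M (update sigma 0 a) p.

(** * phi(x;y), with x = variables 0..kx-1 and y = variables kx..kx+ky-1.
    Tuples are lists of elements of the carrier. *)
Definition agrees (M : structure) (s : nat -> carrier M) (l : list (carrier M)) :=
  forall i v, nth_error l i = Some v -> s i = v.

Definition phi_holds (M : structure) (phi : formula) (a b : list (carrier M)) : Prop :=
  forall s, agrees M s (a ++ b) -> sat M s phi.

(** Characteristic sequence: P_n(b_1,...,b_n) := exists x, /\_i phi(x; b_i),
    where n is the length of the list [bs]. *)
Definition Pn (M : structure) (phi : formula) (kx ky : nat)
    (bs : list (list (carrier M))) : Prop :=
  (forall b, In b bs -> length b = ky) /\
  exists a, length a = kx /\ forall b, In b bs -> phi_holds M phi a b.

Definition P1 M phi kx ky (b : list (carrier M)) := Pn M phi kx ky [b].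
Definition P2 M phi kx ky (b c : list (carrier M)) := Pn M phi kx ky [b; c].

(** Standing assumption: T |- forall y exists z forall x (phi(x;z) <-> ~phi(x;y)). *)
Definition standing (T : theory) (phi : formula) (kx ky : nat) : Prop :=
  forall N : structure, is_model N T ->
    forall b, length b = ky ->
      exists c, length c = ky /\
        forall a, length a = kx -> (phi_holds N phi a c <-> ~ phi_holds N phi a b).

Definition P2b M phi kx ky (b c : list (carrier M)) : bool :=
  if excluded_middle_informative (P2 M phi kx ky b c) then true else false.

Definition edges M phi kx ky (X Y : list (list (carrier M))) : nat :=
  length (filter (fun p => P2b M phi kx ky (fst p) (snd p)) (list_prod X Y)).

Definition density M phi kx ky (X Y : list (list (carrier M))) : R :=
  if (Nat.eqb (length X) 0 || Nat.eqb (length Y) 0)%bool then 0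
  else INR (edges M phi kx ky X Y) / (INR (length X) * INR (length Y)).

(** finite sets are duplicate-free lists *)
Definition eps_regular M phi kx ky (eps : R) (X Y : list (list (carrier M))) : Prop :=
  forall X' Y' : list (list (carrier M)),
    NoDup X' -> incl X' X -> NoDup Y' -> incl Y' Y ->
    INR (length X') >= eps * INR (length X) ->
    INR (length Y') >= eps * INR (length Y) ->
    Rabs (density M phi kx ky X Y - density M phi kx ky X' Y') < eps.

Definition infinite_empty_pair M phi kx ky : Prop :=
  exists X Y : list (carrier M) -> Prop,
    (forall b, X b -> P1 M phi kx ky b) /\
    (forall b, Y b -> P1 M phi kx ky b) /\
    (* |X| = |Y| : a bijection from X onto Y *)
    (exists g : list (carrier M) -> list (carrier M),
        (forall b, X b -> Y (g b)) /\
        (forall b b', X b -> X b' -> g b = g b' -> b = b') /\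
        (forall c, Y c -> exists b, X b /\ g b = c)) /\
    (* |X| >= aleph_0 *)
    (exists f : nat -> list (carrier M),
        (forall n, X (f n)) /\ (forall n m, f n = f m -> n = m)) /\
    (forall b c, X b -> Y c -> ~ P2 M phi kx ky b c).

End Syntax.

(* Main.v *)
Require Import Defs.
From Stdlib Require Import Reals List.
From Stdlib Require Import Lia Lra ClassicalEpsilon Classical FunctionalExtensionality.
Import ListNotations.
Open Scope R_scope.

Section Comb.
Variable A : Type.
Variable E : A -> A -> bool.

Definition edgesE (X Y : list A) : nat :=
  length (filter (fun p => E (fst p) (snd p)) (list_prod X Y)).
Definition densE (X Y : list A) : R :=
  if (Nat.eqb (length X) 0 || Nat.eqb (length Y) 0)%bool then 0
  else INR (edgesE X Y) / (INR (length X) * INR (length Y)).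
Definition deg x (Y : list A) := length (filter (E x) Y).

Lemma edges_cons x X Y : edgesE (x::X) Y = (deg x Y + edgesE X Y)%nat.
Proof.
  unfold edgesE, deg; simpl. rewrite filter_app, length_app. f_equal.
  induction Y as [|y Y IH]; simpl; auto. destruct (E x y); simpl; auto.
Qed.

Lemma edges_le c X Y : (forall x, In x X -> c <= INR (deg x Y)) ->
  c * INR (length X) <= INR (edgesE X Y).
Proof.
  induction X as [|x X IH]; intros H.
  - simpl. unfold edgesE. simpl. lra.
  - rewrite edges_cons. simpl length. rewrite S_INR, plus_INR.
    assert (h1 := H x (or_introl eq_refl)).
    assert (h2 := IH (fun z hz => H z (or_intror hz))). lra.
Qed.

Lemma edges_lt c X Y : (forall x, In x X -> c < INR (deg x Y)) -> X <> [] ->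
  c * INR (length X) < INR (edgesE X Y).
Proof.
  destruct X as [|x X]; intros H hne; [congruence|].
  rewrite edges_cons. simpl length. rewrite S_INR, plus_INR.
  assert (h1 := H x (or_introl eq_refl)).
  assert (h2 := edges_le c X Y (fun z hz => Rlt_le _ _ (H z (or_intror hz)))). lra.
Qed.

Definition inb (Cs : list A) (x : A) : bool :=
  if excluded_middle_informative (In x Cs) then true else false.

Lemma greedy_step (X Y Y' Cs : list A) (n : nat) (delta eps : R) :
  NoDup X -> length X = n -> length Y = n -> NoDup Y' -> incl Y' Y ->
  (forall X' Y'', NoDup X' -> incl X' X -> NoDup Y'' -> incl Y'' Y ->
     INR (length X') >= eps * INR (length X) ->
     INR (length Y'') >= eps * INR (length Y) ->
     Rabs (densE X Y - densE X' Y'') < eps) ->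
  densE X Y = delta -> 0 < eps ->
  INR (length Y') >= eps * INR n ->
  INR (length Cs) + eps * INR n < INR n ->
  exists x, In x X /\ ~ In x Cs /\
    INR (length (filter (fun y => negb (E x y)) Y')) >= (1 - delta - eps) * INR (length Y').
Proof.
  intros ndX lX lY ndY' iY' HR dXY epos hY' hCs.
  apply NNPP; intro Hno.
  set (Cand := filter (fun x => negb (inb Cs x)) X).
  assert (Hbad : forall x, In x Cand ->
     INR (length (filter (fun y => negb (E x y)) Y')) < (1 - delta - eps) * INR (length Y')).
  { intros x hx. unfold Cand in hx. apply filter_In in hx as [hx1 hx2].
    apply Rnot_ge_lt. intro hge. apply Hno. exists x. split; [exact hx1|]. split; [|exact hge].
    unfold inb in hx2. destruct (excluded_middle_informative (In x Cs)); simpl in hx2; [discriminate|auto]. }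
  assert (hlenC : (length X <= length Cand + length Cs)%nat).
  { rewrite <- (filter_length (inb Cs) X). unfold Cand.
    enough (length (filter (inb Cs) X) <= length Cs)%nat by lia.
    apply NoDup_incl_length. apply NoDup_filter; auto.
    intros z hz. apply filter_In in hz as [_ hz]. unfold inb in hz.
    destruct (excluded_middle_informative (In z Cs)); auto; discriminate. }
  assert (hC : INR (length Cand) >= eps * INR (length X)).
  { apply le_INR in hlenC. rewrite plus_INR in hlenC. rewrite lX in *. lra. }
  assert (hn : 0 < INR n) by (pose proof (pos_INR (length Cs)); pose proof (pos_INR n); nra).
  assert (hY'pos : 0 < INR (length Y')) by nra.
  assert (hCpos : 0 < INR (length Cand)) by (rewrite lX in hC; nra).
  specialize (HR Cand Y' (NoDup_filter _ ndX)
     (fun z hz => proj1 (proj1 (filter_In _ _ _) hz)) ndY' iY' hC).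
  rewrite lY in HR. specialize (HR hY').
  assert (Hdeg : forall x, In x Cand -> (delta + eps) * INR (length Y') < INR (deg x Y')).
  { intros x hx. specialize (Hbad x hx). unfold deg.
    pose proof (filter_length (E x) Y') as hf. apply (f_equal INR) in hf.
    rewrite plus_INR in hf. lra. }
  assert (hne : Cand <> []) by (intro h; rewrite h in hCpos; simpl in hCpos; lra).
  pose proof (edges_lt _ Cand Y' Hdeg hne) as Hed.
  unfold densE in HR at 2.
  destruct (Nat.eqb (length Cand) 0) eqn:e1.
  { apply Nat.eqb_eq in e1. rewrite e1 in hCpos. simpl in hCpos. lra. }
  destruct (Nat.eqb (length Y') 0) eqn:e2.
  { apply Nat.eqb_eq in e2. rewrite e2 in hY'pos. simpl in hY'pos. lra. }
  simpl in HR. rewrite dXY in HR.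
  assert (hd : delta + eps < INR (edgesE Cand Y') / (INR (length Cand) * INR (length Y'))).
  { apply Rmult_lt_reg_r with (INR (length Cand) * INR (length Y')). nra.
    unfold Rdiv. rewrite Rmult_assoc, Rinv_l by nra. nra. }
  pose proof (Rabs_Ropp (delta - INR (edgesE Cand Y') / (INR (length Cand) * INR (length Y')))).
  pose proof (Rle_abs (- (delta - INR (edgesE Cand Y') / (INR (length Cand) * INR (length Y'))))).
  lra.
Qed.

Lemma NoDup_firstn' (l : list A) k : NoDup l -> NoDup (firstn k l).
Proof.
  intro h. rewrite <- (firstn_skipn k l) in h. eapply NoDup_app_remove_r; eauto.
Qed.

Lemma incl_firstn' (l : list A) k : incl (firstn k l) l.
Proof.
  intros z hz. rewrite <- (firstn_skipn k l). apply in_or_app. auto.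
Qed.

Lemma greedy_iter (X Y : list A) (n t : nat) (delta : R) :
  NoDup X -> NoDup Y -> length X = n -> length Y = n ->
  (1 <= t)%nat -> 0 < delta < 1 ->
  (forall X' Y'', NoDup X' -> incl X' X -> NoDup Y'' -> incl Y'' Y ->
     INR (length X') >= ((1 - delta)/2)^t * INR (length X) ->
     INR (length Y'') >= ((1 - delta)/2)^t * INR (length Y) ->
     Rabs (densE X Y - densE X' Y'') < ((1 - delta)/2)^t) ->
  densE X Y = delta -> (2 * t <= n)%nat ->
  forall k, (k <= t)%nat -> exists Cs Y', NoDup Cs /\ incl Cs X /\ length Cs = k /\
    NoDup Y' /\ incl Y' Y /\ INR (length Y') >= ((1 - delta)/2)^k * INR n /\
    forall x y, In x Cs -> In y Y' -> E x y = false.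
Proof.
  intros ndX ndY lX lY ht hd HR dXY htn.
  set (q := (1 - delta)/2) in *.
  assert (hq : 0 < q < 1/2) by (unfold q; lra).
  assert (hqt : q ^ t <= q).
  { destruct t as [|t]; [lia|]. simpl.
    assert (0 <= q^t) by (apply pow_le; lra).
    assert (q ^ t <= 1).
    { clear -hq. induction t; simpl; [lra|]. assert (0 <= q^t) by (apply pow_le; lra). nra. }
    nra. }
  assert (hqtpos : 0 < q ^ t) by (apply pow_lt; lra).
  induction k as [|k IH]; intros hk.
  - exists [], Y. repeat split; auto using NoDup_nil.
    + intros z hz; inversion hz.
    + intros z hz; auto.
    + rewrite lY. simpl. lra.
    + intros x y hx; inversion hx.
  - destruct (IH ltac:(lia)) as [Cs [Y' [ndC [iC [lC [ndY' [iY' [hY' hE]]]]]]]].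
    assert (hqk : q ^ t <= q ^ k).
    { replace t with (k + (t - k))%nat by lia. rewrite pow_add.
      assert (0 <= q ^ (t - k)) by (apply pow_le; lra).
      assert (q ^ (t - k) <= 1).
      { clear -hq. induction (t - k)%nat; simpl; [lra|]. assert (0 <= q^n) by (apply pow_le; lra). nra. }
      assert (0 <= q^k) by (apply pow_le; lra). nra. }
    assert (hn : 0 <= INR n) by apply pos_INR.
    assert (hS1 : INR (length Y') >= q ^ t * INR n) by nra.
    assert (hS2 : INR (length Cs) + q ^ t * INR n < INR n).
    { rewrite lC. apply le_INR in htn. rewrite mult_INR in htn. simpl in htn.
      assert (INR (S k) <= INR t) by (apply le_INR; lia). rewrite S_INR in H.
      assert (1 <= INR t) by (apply (le_INR 1); lia). nra. }
    destruct (greedy_step X Y Y' Cs n delta (q ^ t) ndX lX lY ndY' iY' HR dXY hqtpos hS1 hS2)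
      as [x [hx [hxC hxd]]].
    exists (x :: Cs), (filter (fun y => negb (E x y)) Y'). repeat split.
    + constructor; auto.
    + intros z [<-|hz]; auto.
    + simpl; lia.
    + apply NoDup_filter; auto.
    + intros z hz. apply filter_In in hz as [hz _]. auto.
    + simpl. assert (0 <= INR (length Y')) by apply pos_INR.
      assert (0 <= q ^ k * INR n) by (apply Rmult_le_pos; [apply pow_le; lra| lra]).
      assert (1 - delta - q ^ t >= q) by (unfold q in *; lra). nra.
    + intros a y ha hy; apply filter_In in hy as [hy1 hy2].
      destruct ha as [ea|ha].
      * subst a. destruct (E x y); auto; discriminate.
      * auto.
Qed.

End Comb.


Lemma finite_pairs (L : signature) (phi : formula L) (kx ky : nat) (M : structure L) :
  (exists delta : R, 0 < delta < 1 /\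
     forall eps : R, 0 < eps < 1 -> forall N : nat,
       exists X Y : list (list (carrier M)),
         NoDup X /\ NoDup Y /\
         (forall b, In b X -> ~ In b Y) /\
         (forall b, In b X -> P1 M phi kx ky b) /\
         (forall b, In b Y -> P1 M phi kx ky b) /\
         length X = length Y /\ (N <= length X)%nat /\
         eps_regular M phi kx ky eps X Y /\
         density M phi kx ky X Y = delta) ->
  forall t, exists Xs Ys : list (list (carrier M)),
    NoDup Xs /\ NoDup Ys /\ length Xs = t /\ length Ys = t /\
    (forall b, In b Xs -> P1 M phi kx ky b) /\ (forall b, In b Ys -> P1 M phi kx ky b) /\
    (forall b c, In b Xs -> In c Ys -> ~ P2 M phi kx ky b c).
Proof.
  intros [delta [hd H]] t.
  destruct t as [|t0].
  { exists [], []. repeat split; try constructor; intros; contradiction. }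
  set (t := S t0). set (q := (1 - delta)/2).
  assert (hq : 0 < q < 1/2) by (unfold q; lra).
  assert (hqtpos : 0 < q ^ t) by (apply pow_lt; lra).
  assert (hqt : q ^ t < 1).
  { unfold t. simpl. assert (q ^ t0 <= 1).
    { clear -hq. induction t0; simpl; [lra|]. assert (0 <= q^t0) by (apply pow_le; lra). nra. }
    nra. }
  destruct (INR_unbounded (INR t / q ^ t + 2 * INR t)) as [N hN].
  destruct (H (q ^ t) (conj hqtpos hqt) N) as
    [X [Y [ndX [ndY [_ [hX [hY [lXY [hNX [hreg hdens]]]]]]]]]].
  set (n := length X).
  assert (htn : (2 * t <= n)%nat).
  { apply INR_le. rewrite mult_INR. simpl (INR 2).
    apply le_INR in hNX. assert (0 <= INR t / q ^ t).
    { apply Rmult_le_pos; [apply pos_INR| left; apply Rinv_0_lt_compat; auto]. }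
    fold n in hNX. lra. }
  destruct (greedy_iter _ (P2b M phi kx ky) X Y n t delta ndX ndY eq_refl (eq_sym lXY)
     ltac:(unfold t; lia) hd hreg hdens htn t (le_n t))
    as [Cs [Y' [ndC [iC [lC [ndY' [iY' [hY' hE]]]]]]]].
  assert (hlen : (t <= length Y')%nat).
  { apply INR_le. fold q in hY'.
    assert (INR t <= q ^ t * INR n).
    { apply le_INR in hNX. fold n in hNX.
      assert (INR t / q ^ t <= INR n) by (assert (0 <= INR t) by apply pos_INR; lra).
      apply Rmult_le_reg_l with (/ q ^ t). apply Rinv_0_lt_compat; auto.
      rewrite <- Rmult_assoc, Rinv_l by lra. unfold Rdiv in H0. lra. }
    lra. }
  exists Cs, (firstn t Y'). split; [|split; [|split; [|split; [|split; [|split]]]]].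
  - exact ndC.
  - apply NoDup_firstn'; auto.
  - exact lC.
  - rewrite length_firstn. lia.
  - intros b hb. apply hX. apply iC; auto.
  - intros b hb. apply hY. apply iY'. eapply incl_firstn'; eauto.
  - intros b0 c hb hc hP. assert (hc' : In c Y') by (eapply incl_firstn'; eauto).
    specialize (hE b0 c hb hc'). unfold P2b in hE.
    destruct (excluded_middle_informative (P2 M phi kx ky b0 c)); [discriminate|contradiction].
Qed.

Set Implicit Arguments.
Open Scope nat_scope.

Section Sem.
Variable L : signature.
Variable M : structure L.
Notation F := (formula L).
Notation car := (carrier M).

Lemma term_coinc (s1 s2 : nat -> car) t :
  (forall n, term_free n t -> s1 n = s2 n) -> eval M s1 t = eval M s2 t.
Proof.
  induction t as [k|f args IH]; simpl; intros H.
  - apply H. reflexivity.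
  - f_equal. apply functional_extensionality. intro i. apply IH.
    intros n hn. apply H. exists i. exact hn.
Qed.

Lemma sat_coinc (p : F) : forall s1 s2 : nat -> car,
  (forall n, free n p -> s1 n = s2 n) -> (sat M s1 p <-> sat M s2 p).
Proof.
  induction p as [| t1 t2 | r args | p IH | p IHp q IHq | p IHp q IHq | p IHp q IHq
                  | k p IH | k p IH]; simpl; intros s1 s2 H.
  - tauto.
  - rewrite (term_coinc s1 s2 t1), (term_coinc s1 s2 t2); [tauto| |]; intros; apply H; auto.
  - replace (fun i => eval M s1 (args i)) with (fun i => eval M s2 (args i)); [tauto|].
    apply functional_extensionality. intro i. symmetry. apply term_coinc.
    intros n hn. apply H. exists i; auto.
  - rewrite (IH s1 s2 H). tauto.
  - rewrite (IHp s1 s2), (IHq s1 s2); [tauto| |]; intros; apply H; auto.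
  - rewrite (IHp s1 s2), (IHq s1 s2); [tauto| |]; intros; apply H; auto.
  - rewrite (IHp s1 s2), (IHq s1 s2); [tauto| |]; intros; apply H; auto.
  - assert (HH : forall a, sat M (update s1 k a) p <-> sat M (update s2 k a) p).
    { intro a. apply IH. intros n hn. unfold update. destruct (Nat.eqb n k) eqn:e; auto.
      apply H. split; auto. apply Nat.eqb_neq in e. auto. }
    split; intros [a ha]; exists a; apply HH; auto.
  - assert (HH : forall a, sat M (update s1 k a) p <-> sat M (update s2 k a) p).
    { intro a. apply IH. intros n hn. unfold update. destruct (Nat.eqb n k) eqn:e; auto.
      apply H. split; auto. apply Nat.eqb_neq in e. auto. }
    split; intros ha a; apply HH; auto.
Qed.

Definition exq (vs : list nat) (p : F) : F := fold_right (fun v q => fEx v q) p vs.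
Definition allq (vs : list nat) (p : F) : F := fold_right (fun v q => fAll v q) p vs.

Lemma exq_sem vs p : forall s, sat M s (exq vs p) <->
  exists t, (forall n, ~ In n vs -> t n = s n) /\ sat M t p.
Proof.
  induction vs as [|v vs IH]; simpl; intros s.
  - split; [intro h; exists s; auto | intros [t [ht h]]].
    replace s with t; auto. apply functional_extensionality; intro n; apply ht; auto.
  - split.
    + intros [a ha]. apply IH in ha as [t [ht h]]. exists t. split; auto.
      intros n hn. rewrite ht by tauto. unfold update.
      destruct (Nat.eqb n v) eqn:e; auto. apply Nat.eqb_eq in e. subst. tauto.
    + intros [t [ht h]]. exists (t v). apply IH. exists t. split; auto.
      intros n hn. unfold update. destruct (Nat.eqb n v) eqn:e.
      * apply Nat.eqb_eq in e. subst; auto.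
      * apply ht. apply Nat.eqb_neq in e. intros [h'|h']; auto.
Qed.

Lemma allq_sem vs p : forall s, sat M s (allq vs p) <->
  forall t, (forall n, ~ In n vs -> t n = s n) -> sat M t p.
Proof.
  induction vs as [|v vs IH]; simpl; intros s.
  - split; [intros h t ht|intro h; apply h; auto].
    replace t with s; auto. apply functional_extensionality; intro n; symmetry; apply ht; auto.
  - split.
    + intros h t ht. specialize (h (t v)). pose proof (proj1 (IH _) h) as h2. apply h2.
      intros n hn. unfold update. destruct (Nat.eqb n v) eqn:e.
      * apply Nat.eqb_eq in e. subst; auto.
      * apply ht. apply Nat.eqb_neq in e. intros [h'|h']; auto.
    + intros h a. apply IH. intros t ht. apply h.
      intros n hn. rewrite ht by tauto. unfold update.
      destruct (Nat.eqb n v) eqn:e; auto. apply Nat.eqb_eq in e. subst. tauto.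
Qed.

Definition bigAnd (l : list F) : F := fold_right (fun p q => fAnd p q) (fNot (fFalse L)) l.

Lemma bigAnd_sem l s : sat M s (bigAnd l) <-> forall p, In p l -> sat M s p.
Proof.
  induction l as [|p l IH]; simpl.
  - split; [intros _ p []| intros _ h; exact h].
  - rewrite IH. split; [intros [h1 h2] q [<-|hq]; auto| intro h; split; auto].
Qed.

End Sem.


Unset Implicit Arguments.
Section Phi.
Variable L : signature.
Variable M : structure L.
Variable phi : formula L.
Variables kx ky : nat.
Notation F := (formula L).
Notation car := (carrier M).
Definition K := (kx + ky)%nat.

Definition phiF (ws : list nat) : F :=
  allq (seq 0 K) (fImp (bigAnd (map (fun j => fEq (tvar L j) (tvar L (nth j ws 0))) (seq 0 K))) phi).

Lemma phiF_sem (ws : list nat) (s : nat -> car) :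
  formula_in phi K -> length ws = K -> (forall w, In w ws -> K <= w) ->
  (sat M s (phiF ws) <-> forall s', agrees M s' (map s ws) -> sat M s' phi).
Proof.
  intros hphi hl hw. unfold phiF. rewrite allq_sem. split.
  - intros H s' hag.
    set (t := fun n => if Nat.ltb n K then s (nth n ws 0) else s n).
    assert (ht : forall n, ~ In n (seq 0 K) -> t n = s n).
    { intros n hn. unfold t. destruct (Nat.ltb n K) eqn:e; auto.
      apply Nat.ltb_lt in e. exfalso. apply hn. apply in_seq. lia. }
    specialize (H t ht). simpl in H.
    assert (Hs : sat M t phi).
    { apply H. apply bigAnd_sem. intros q hq. apply in_map_iff in hq as [j [<- hj]].
      apply in_seq in hj. simpl. unfold t.
      assert (hjK : Nat.ltb j K = true) by (apply Nat.ltb_lt; lia). rewrite hjK.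
      assert (hw' : K <= nth j ws 0) by (apply hw; apply nth_In; lia).
      destruct (Nat.ltb (nth j ws 0) K) eqn:e; auto. apply Nat.ltb_lt in e. lia. }
    apply (@sat_coinc L M phi t s'); auto.
    intros n hn. apply hphi in hn. unfold t.
    assert (hnK : Nat.ltb n K = true) by (apply Nat.ltb_lt; lia). rewrite hnK.
    symmetry. apply hag. rewrite nth_error_map.
    rewrite (nth_error_nth' ws 0) by lia. reflexivity.
  - intros H t ht. simpl. intro heqs. apply H.
    intros i v hi. rewrite bigAnd_sem in heqs.
    assert (hiK : i < length (map s ws)).
    { apply nth_error_Some. rewrite hi. discriminate. }
    rewrite length_map in hiK.
    rewrite nth_error_map, (nth_error_nth' ws 0) in hi by lia. simpl in hi. injection hi as <-.
    specialize (heqs (fEq (tvar L i) (tvar L (nth i ws 0)))).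
    simpl in heqs. rewrite heqs.
    + apply ht. intro hin. apply in_seq in hin.
      assert (K <= nth i ws 0) by (apply hw; apply nth_In; lia). lia.
    + apply in_map_iff. exists i. split; auto. apply in_seq. lia.
Qed.

Definition slotv k := (S K + 3 * k)%nat.
Definition parv k := (S K + 3 * k + 1)%nat.
Definition xv c := (S K + 3 * c + 2)%nat.
Definition xvs := map xv (seq 0 kx).

Lemma in_xvs x : In x xvs <-> exists c, c < kx /\ x = xv c.
Proof.
  unfold xvs. rewrite in_map_iff. split.
  - intros [c [<- hc]]. apply in_seq in hc. exists c; split; auto; lia.
  - intros [c [hc ->]]. exists c. split; auto. apply in_seq; lia.
Qed.

Lemma map_nth_seq (A : Type) (a : list A) d : map (fun c => nth c a d) (seq 0 (length a)) = a.
Proof.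
  induction a as [|x a IH]; simpl; auto. f_equal.
  rewrite <- seq_shift, map_map. simpl. exact IH.
Qed.

Definition good_ys (ys : list nat) := forall y, In y ys -> K <= y /\ ~ In y xvs.

Lemma xvs_ge : forall w, In w xvs -> K <= w.
Proof. intros w hw. apply in_xvs in hw as [c [_ ->]]. unfold xv. lia. Qed.

Lemma xvs_len : length xvs = kx.
Proof. unfold xvs. rewrite length_map, length_seq. auto. Qed.

Lemma assign_x (s : nat -> car) (a : list car) : length a = kx ->
  exists t, (forall n, ~ In n xvs -> t n = s n) /\ map t xvs = a.
Proof.
  intros ha. exists (fun n => if in_dec Nat.eq_dec n xvs then nth ((n - S K)/3) a (witness M) else s n).
  split.
  - intros n hn. destruct (in_dec Nat.eq_dec n xvs); tauto.
  - transitivity (map (fun c => nth c a (witness M)) (seq 0 kx));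
      [| rewrite <- ha; apply map_nth_seq].
    assert (hx : xvs = map xv (seq 0 kx)) by reflexivity.
    rewrite hx at 1. rewrite map_map.
    apply map_ext_in. intros c hc. apply in_seq in hc.
    destruct (in_dec Nat.eq_dec (xv c) xvs) as [_|hn].
    + f_equal. unfold xv. symmetry; apply Nat.div_unique with 2; lia.
    + exfalso. apply hn. apply in_xvs. exists c. split; auto; lia.
Qed.

Definition P1F (ys : list nat) : F := exq (xvs) (phiF (xvs ++ ys)).

Lemma P1F_sem ys s : formula_in phi K -> length ys = ky -> good_ys ys ->
  (sat M s (P1F ys) <-> P1 M phi kx ky (map s ys)).
Proof.
  intros hphi hl hg. unfold P1F. rewrite exq_sem.
  assert (hlen : length (xvs ++ ys) = K) by (rewrite length_app, xvs_len, hl; reflexivity).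
  assert (hge : forall w, In w (xvs ++ ys) -> K <= w).
  { intros w hw. apply in_app_or in hw as [hw|hw]; [apply xvs_ge; auto| apply hg; auto]. }
  split.
  - intros [t [ht hs]]. rewrite phiF_sem in hs by auto.
    split.
    + intros b [<-|[]]. rewrite length_map; auto.
    + exists (map t xvs). split; [rewrite length_map, xvs_len; auto|].
      intros b [<-|[]]. intros s' hag. apply hs. rewrite map_app.
      replace (map t ys) with (map s ys); auto.
      apply map_ext_in. intros y hy. symmetry. apply ht. apply hg; auto.
  - intros [_ [a [ha hp]]]. destruct (assign_x s a ha) as [t [ht hta]].
    exists t. split; auto. rewrite phiF_sem by auto.
    intros s' hag. apply (hp (map s ys) (or_introl eq_refl)).
    rewrite map_app in hag. rewrite hta in hag.
    replace (map s ys) with (map t ys); auto.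
    apply map_ext_in. intros y hy. apply ht. apply hg; auto.
Qed.

Definition P2F (ys1 ys2 : list nat) : F :=
  exq xvs (fAnd (phiF (xvs ++ ys1)) (phiF (xvs ++ ys2))).

Lemma P2F_sem ys1 ys2 s : formula_in phi K -> length ys1 = ky -> length ys2 = ky ->
  good_ys ys1 -> good_ys ys2 ->
  (sat M s (P2F ys1 ys2) <-> P2 M phi kx ky (map s ys1) (map s ys2)).
Proof.
  intros hphi hl1 hl2 hg1 hg2. unfold P2F. rewrite exq_sem.
  assert (hlen1 : length (xvs ++ ys1) = K) by (rewrite length_app, xvs_len, hl1; reflexivity).
  assert (hlen2 : length (xvs ++ ys2) = K) by (rewrite length_app, xvs_len, hl2; reflexivity).
  assert (hge1 : forall w, In w (xvs ++ ys1) -> K <= w).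
  { intros w hw. apply in_app_or in hw as [hw|hw]; [apply xvs_ge; auto| apply hg1; auto]. }
  assert (hge2 : forall w, In w (xvs ++ ys2) -> K <= w).
  { intros w hw. apply in_app_or in hw as [hw|hw]; [apply xvs_ge; auto| apply hg2; auto]. }
  assert (E1 : forall t, (forall n, ~ In n xvs -> t n = s n) -> map t ys1 = map s ys1).
  { intros t ht. apply map_ext_in. intros y hy. apply ht. apply hg1; auto. }
  assert (E2 : forall t, (forall n, ~ In n xvs -> t n = s n) -> map t ys2 = map s ys2).
  { intros t ht. apply map_ext_in. intros y hy. apply ht. apply hg2; auto. }
  split.
  - intros [t [ht [hs1 hs2]]]. rewrite phiF_sem in hs1, hs2 by auto.
    split.
    + intros b [<-|[<-|[]]]; rewrite length_map; auto.
    + exists (map t xvs). split; [rewrite length_map, xvs_len; auto|].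
      intros b [<-|[<-|[]]]; intros s' hag.
      * apply hs1. rewrite map_app, E1; auto.
      * apply hs2. rewrite map_app, E2; auto.
  - intros [_ [a [ha hp]]]. destruct (assign_x s a ha) as [t [ht hta]].
    exists t. split; auto. simpl. rewrite !phiF_sem by auto. split.
    + intros s' hag. apply (hp (map s ys1) (or_introl eq_refl)).
      rewrite map_app, hta, E1 in hag; auto.
    + intros s' hag. apply (hp (map s ys2) (or_intror (or_introl eq_refl))).
      rewrite map_app, hta, E2 in hag; auto.
Qed.

Definition eqF (ws1 ws2 : list nat) : F :=
  bigAnd (map (fun p => fEq (tvar L (fst p)) (tvar L (snd p))) (combine ws1 ws2)).

Lemma eqF_sem ws1 : forall ws2 s, length ws1 = length ws2 ->
  (sat M s (eqF ws1 ws2) <-> map s ws1 = map s ws2).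
Proof.
  induction ws1 as [|w ws IH]; intros [|w2 ws2] s hl; simpl in hl; try discriminate.
  - simpl. split; auto.
  - unfold eqF. simpl. fold (eqF ws ws2). rewrite IH by lia. split.
    + intros [h1 h2]. rewrite h1, h2. auto.
    + intro h. injection h as h1 h2. auto.
Qed.

Hypothesis hphi : formula_in phi K.

Definition bv i := map (fun c => slotv (2*ky*i + c)) (seq 0 ky).
Definition cv i := map (fun c => slotv (2*ky*i + ky + c)) (seq 0 ky).

Lemma slot_good f : good_ys (map (fun c => slotv (f c)) (seq 0 ky)).
Proof.
  intros y hy. apply in_map_iff in hy as [c [<- _]]. split; [unfold slotv; lia|].
  intro h. apply in_xvs in h as [d [_ hd]]. unfold slotv, xv in hd. lia.
Qed.

Lemma slot_len f : length (map (fun c => slotv (f c)) (seq 0 ky)) = ky.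
Proof. rewrite length_map, length_seq; auto. Qed.

Lemma bv_len i : length (bv i) = ky. Proof. apply slot_len. Qed.
Lemma cv_len i : length (cv i) = ky. Proof. apply slot_len. Qed.
Lemma bv_good i : good_ys (bv i). Proof. apply slot_good. Qed.
Lemma cv_good i : good_ys (cv i). Proof. apply slot_good. Qed.

Definition Btup (t : nat -> car) i := map t (bv i).
Definition Ctup (t : nat -> car) i := map t (cv i).

Definition Qsem (t : nat -> car) i j : Prop :=
  P1 M phi kx ky (Btup t i) /\ P1 M phi kx ky (Ctup t j) /\
  ~ P2 M phi kx ky (Btup t i) (Ctup t j) /\
  (i <> j -> Btup t i <> Btup t j /\ Ctup t i <> Ctup t j).

Definition QF i j : F :=
  bigAnd [P1F (bv i); P1F (cv j); fNot (P2F (bv i) (cv j));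
          if Nat.eqb i j then fNot (fFalse L)
          else fAnd (fNot (eqF (bv i) (bv j))) (fNot (eqF (cv i) (cv j)))].

Lemma QF_sem t i j : sat M t (QF i j) <-> Qsem t i j.
Proof.
  unfold QF, Qsem, Btup, Ctup. rewrite bigAnd_sem.
  rewrite <- !P1F_sem by (auto using bv_len, cv_len, bv_good, cv_good).
  rewrite <- !P2F_sem by (auto using bv_len, cv_len, bv_good, cv_good).
  rewrite <- !eqF_sem by (rewrite ?bv_len, ?cv_len; auto).
  split.
  - intro h. split; [apply h; simpl; auto|]. split; [apply h; simpl; auto|].
    split; [apply (h (fNot (P2F (bv i) (cv j)))); simpl; auto|].
    intro hij. assert (h4 := h (if Nat.eqb i j then fNot (fFalse L)
          else fAnd (fNot (eqF (bv i) (bv j))) (fNot (eqF (cv i) (cv j)))) ltac:(simpl; auto)).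
    destruct (Nat.eqb i j) eqn:e; [apply Nat.eqb_eq in e; contradiction|]. exact h4.
  - intros [h1 [h2 [h3 h4]]] q hq. simpl in hq.
    destruct hq as [<-|[<-|[<-|[<-|[]]]]]; auto.
    destruct (Nat.eqb i j) eqn:e; simpl; auto.
    apply h4. apply Nat.eqb_neq; auto.
Qed.

Definition Good n (t : nat -> car) := forall i j, i < n -> j < n -> Qsem t i j.
Definition GoodF n : F :=
  bigAnd (map (fun p => QF (fst p) (snd p)) (list_prod (seq 0 n) (seq 0 n))).

Lemma GoodF_sem n t : sat M t (GoodF n) <-> Good n t.
Proof.
  unfold GoodF, Good. rewrite bigAnd_sem. split.
  - intros h i j hi hj. apply QF_sem. apply h. apply in_map_iff.
    exists (i, j). split; auto. apply in_prod; apply in_seq; lia.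
  - intros h q hq. apply in_map_iff in hq as [[i j] [<- hp]].
    apply in_prod_iff in hp as [hi hj]. apply in_seq in hi, hj.
    apply QF_sem. simpl. apply h; lia.
Qed.

Lemma Good_mono n N t : n <= N -> Good N t -> Good n t.
Proof. intros h g i j hi hj. apply g; lia. Qed.

Lemma Good_ext n t1 t2 : (forall k, k < 2*ky*n -> t1 (slotv k) = t2 (slotv k)) ->
  Good n t1 -> Good n t2.
Proof.
  intros h g.
  assert (hB : forall i, i < n -> Btup t1 i = Btup t2 i).
  { intros i hi. unfold Btup, bv. rewrite !map_map. apply map_ext_in.
    intros c hc. apply in_seq in hc. apply h. nia. }
  assert (hC : forall i, i < n -> Ctup t1 i = Ctup t2 i).
  { intros i hi. unfold Ctup, cv. rewrite !map_map. apply map_ext_in.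
    intros c hc. apply in_seq in hc. apply h. nia. }
  intros i j hi hj. unfold Qsem. rewrite <- (hB i hi), <- (hC j hj), <- (hB j hj), <- (hC i hi).
  apply g; auto.
Qed.

Definition slots R := map slotv (seq 0 R).

Lemma in_slots x R : In x (slots R) <-> exists k, k < R /\ x = slotv k.
Proof.
  unfold slots. rewrite in_map_iff. split.
  - intros [k [<- hk]]. apply in_seq in hk. exists k; split; auto; lia.
  - intros [k [hk ->]]. exists k; split; auto. apply in_seq; lia.
Qed.

Definition psi m n : F :=
  exq (slots (m + 1 + 2*ky*n))
    (bigAnd (fEq (tvar L (slotv m)) (tvar L 0) :: GoodF n ::
             map (fun k => fEq (tvar L (slotv k)) (tvar L (parv k))) (seq 0 m))).

Definition Ext m (tc : nat -> car) :=
  forall n, exists t', (forall k, k < m -> t' (slotv k) = tc (slotv k)) /\ Good n t'.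

Lemma psi_sem m n s : sat M s (psi m n) <->
  exists t, (forall x, ~ In x (slots (m + 1 + 2*ky*n)) -> t x = s x) /\
    t (slotv m) = s 0 /\ Good n t /\ (forall k, k < m -> t (slotv k) = s (parv k)).
Proof.
  unfold psi. rewrite exq_sem.
  assert (h0 : ~ In 0 (slots (m + 1 + 2*ky*n))).
  { intro h. apply in_slots in h as [k [_ hk]]. unfold slotv in hk. lia. }
  assert (hp : forall k, ~ In (parv k) (slots (m + 1 + 2*ky*n))).
  { intros k h. apply in_slots in h as [k' [_ hk]]. unfold slotv, parv in hk. lia. }
  split.
  - intros [t [ht hs]]. rewrite bigAnd_sem in hs. exists t. split; auto.
    split; [rewrite <- (ht 0 h0); apply (hs (fEq (tvar L (slotv m)) (tvar L 0))); simpl; auto|].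
    split; [apply GoodF_sem; apply hs; simpl; auto|].
    intros k hk. rewrite <- (ht _ (hp k)).
    apply (hs (fEq (tvar L (slotv k)) (tvar L (parv k)))). simpl. right; right.
    apply in_map_iff. exists k; split; auto. apply in_seq; lia.
  - intros [t [ht [h1 [h2 h3]]]]. exists t. split; auto. apply bigAnd_sem.
    intros q hq. destruct hq as [<-|[<-|hq]].
    + simpl. rewrite h1, ht; auto.
    + apply GoodF_sem; auto.
    + apply in_map_iff in hq as [k [<- hk]]. apply in_seq in hk. simpl.
      rewrite h3, ht; auto. lia.
Qed.

Lemma max_bound (l : list F) m : (forall p, In p l -> exists n, p = psi m n) ->
  exists N, forall p, In p l -> exists n, n <= N /\ p = psi m n.
Proof.
  induction l as [|p l IH]; intros h.
  - exists 0. intros p [].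
  - destruct IH as [N hN]. { intros q hq. apply h. simpl; auto. }
    destruct (h p (or_introl eq_refl)) as [n0 ->].
    exists (Nat.max n0 N). intros q [<-|hq].
    + exists n0. split; auto; lia.
    + destruct (hN q hq) as [n [hn ->]]. exists n; split; auto; lia.
Qed.

Lemma step m tc : aleph1_saturated M -> Ext m tc ->
  exists a, Ext (S m) (update tc (slotv m) a).
Proof.
  intros hsat hE.
  set (sigma := fun x => tc (x - 1)).
  assert (hsig : forall k, sigma (parv k) = tc (slotv k)).
  { intro k. unfold sigma. f_equal. unfold parv, slotv. lia. }
  assert (hpar0 : forall k, parv k <> 0) by (intros k; unfold parv; lia).
  destruct (hsat sigma (fun p => exists n, p = psi m n)) as [a ha].
  - intros l hl. destruct (max_bound l m hl) as [N hN].
    destruct (hE N) as [t' [ht' hg']].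
    exists (t' (slotv m)). intros p hp. destruct (hN p hp) as [n [hn ->]].
    apply psi_sem.
    set (R := m + 1 + 2*ky*n).
    exists (fun x => if in_dec Nat.eq_dec x (slots R) then t' x else update sigma 0 (t' (slotv m)) x).
    split; [intros x hx; destruct (in_dec Nat.eq_dec x (slots R)); tauto|].
    assert (hin : forall k, k < R -> In (slotv k) (slots R)).
    { intros k hk. apply in_slots. exists k; auto. }
    split.
    + destruct (in_dec Nat.eq_dec (slotv m) (slots R)) as [_|hn']; [|exfalso; apply hn'; apply hin; unfold R; lia].
      unfold update. simpl. reflexivity.
    + split.
      * apply (Good_ext n t'); [|apply (Good_mono n N); auto].
        intros k hk. destruct (in_dec Nat.eq_dec (slotv k) (slots R)) as [_|hn']; auto.
        exfalso; apply hn'; apply hin; unfold R; lia.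
      * intros k hk. destruct (in_dec Nat.eq_dec (slotv k) (slots R)) as [_|hn'];
          [|exfalso; apply hn'; apply hin; unfold R; lia].
        unfold update. destruct (Nat.eqb (parv k) 0) eqn:e; [apply Nat.eqb_eq in e; exfalso; apply (hpar0 k); auto|].
        rewrite hsig. apply ht'; auto.
  - exists a. intros n. destruct (proj1 (psi_sem m n (update sigma 0 a)) (ha _ (ex_intro _ n eq_refl)))
      as [t [ht [h1 [h2 h3]]]].
    exists t. split; auto. intros k hk.
    unfold update. destruct (Nat.eqb (slotv k) (slotv m)) eqn:e.
    + apply Nat.eqb_eq in e. unfold slotv in e. assert (k = m) by lia. subst k.
      rewrite h1. reflexivity.
    + apply Nat.eqb_neq in e. assert (k <> m) by (intro; subst; auto).
      rewrite h3 by lia. unfold update. destruct (Nat.eqb (parv k) 0) eqn:e2;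
        [apply Nat.eqb_eq in e2; exfalso; apply (hpar0 k); auto|]. apply hsig.
Qed.
Lemma Ext0 (t0 : nat -> car) : 0 < ky ->
  (forall n, exists Xs Ys : list (list car),
    NoDup Xs /\ NoDup Ys /\ length Xs = n /\ length Ys = n /\
    (forall b, In b Xs -> P1 M phi kx ky b) /\ (forall b, In b Ys -> P1 M phi kx ky b) /\
    (forall b c, In b Xs -> In c Ys -> ~ P2 M phi kx ky b c)) ->
  Ext 0 t0.
Proof.
  intros hky H n. destruct (H n) as [Xs [Ys [ndX [ndY [lX [lY [hX [hY hXY]]]]]]]].
  set (w := witness M).
  set (e := fun k => if Nat.ltb (k mod (2*ky)) ky then nth (k mod (2*ky)) (nth (k / (2*ky)) Xs []) w
                     else nth (k mod (2*ky) - ky) (nth (k / (2*ky)) Ys []) w).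
  set (t' := fun x => e ((x - S K)/3)).
  assert (hts : forall k, t' (slotv k) = e k).
  { intro k. unfold t'. f_equal. unfold slotv. symmetry; apply Nat.div_unique with 0; lia. }
  assert (hlX : forall i, i < n -> length (nth i Xs []) = ky).
  { intros i hi. assert (hi' : i < length Xs) by lia. destruct (hX (nth i Xs []) (nth_In _ [] hi')) as [hl _].
    apply hl. simpl; auto. }
  assert (hlY : forall i, i < n -> length (nth i Ys []) = ky).
  { intros i hi. assert (hi' : i < length Ys) by lia. destruct (hY (nth i Ys []) (nth_In _ [] hi')) as [hl _].
    apply hl. simpl; auto. }
  assert (hB : forall i, i < n -> Btup t' i = nth i Xs []).
  { intros i hi. unfold Btup, bv. rewrite map_map.
    rewrite <- (map_nth_seq _ (nth i Xs []) w), hlX by auto.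
    apply map_ext_in. intros c hc. apply in_seq in hc. rewrite hts. unfold e.
    assert (hm : (2*ky*i + c) mod (2*ky) = c) by (symmetry; apply Nat.mod_unique with i; lia).
    assert (hd : (2*ky*i + c) / (2*ky) = i) by (symmetry; apply Nat.div_unique with c; lia).
    rewrite hm, hd. destruct (Nat.ltb c ky) eqn:E; auto. apply Nat.ltb_nlt in E. lia. }
  assert (hC : forall i, i < n -> Ctup t' i = nth i Ys []).
  { intros i hi. unfold Ctup, cv. rewrite map_map.
    rewrite <- (map_nth_seq _ (nth i Ys []) w), hlY by auto.
    apply map_ext_in. intros c hc. apply in_seq in hc. rewrite hts. unfold e.
    assert (hm : (2*ky*i + ky + c) mod (2*ky) = ky + c) by (symmetry; apply Nat.mod_unique with i; lia).
    assert (hd : (2*ky*i + ky + c) / (2*ky) = i) by (symmetry; apply Nat.div_unique with (ky + c); lia).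
    rewrite hm, hd. destruct (Nat.ltb (ky + c) ky) eqn:E; [apply Nat.ltb_lt in E; lia|].
    f_equal. lia. }
  exists t'. split; [intros k hk; lia|].
  intros i j hi hj. unfold Qsem. rewrite (hB i hi), (hC j hj), (hB j hj), (hC i hi).
  split; [apply hX; apply nth_In; lia|].
  split; [apply hY; apply nth_In; lia|].
  split; [apply hXY; apply nth_In; lia|].
  intro hij. split; intro heq; apply hij.
  - apply (proj1 (NoDup_nth Xs []) ndX); auto; lia.
  - apply (proj1 (NoDup_nth Ys []) ndY); auto; lia.
Qed.

Fixpoint iterT (G : nat -> (nat -> car) -> car) (t0 : nat -> car) (m : nat) : nat -> car :=
  match m with
  | 0 => t0
  | S m => update (iterT G t0 m) (slotv m) (G m (iterT G t0 m))
  end.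

Lemma iterT_stable G t0 k m : k < m -> iterT G t0 m (slotv k) = iterT G t0 (S k) (slotv k).
Proof.
  induction m as [|m IH]; intros h; [lia|].
  destruct (Nat.eq_dec k m) as [->|hne]; auto.
  simpl. unfold update at 1. destruct (Nat.eqb (slotv k) (slotv m)) eqn:e.
  - apply Nat.eqb_eq in e. unfold slotv in e. lia.
  - rewrite IH by lia. reflexivity.
Qed.

Lemma construct : aleph1_saturated M -> Ext 0 (fun _ => witness M) ->
  exists tl : nat -> car, forall n, Good n tl.
Proof.
  intros hsat h0.
  assert (HG : forall m t, exists a, Ext m t -> Ext (S m) (update t (slotv m) a)).
  { intros m t. destruct (classic (Ext m t)) as [h|h].
    - destruct (step m t hsat h) as [a ha]. exists a; auto.
    - exists (witness M). intro; contradiction. }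
  set (G := fun m t => proj1_sig (constructive_indefinite_description _ (HG m t))).
  assert (hG : forall m t, Ext m t -> Ext (S m) (update t (slotv m) (G m t))).
  { intros m t. unfold G. destruct (constructive_indefinite_description _ (HG m t)); auto. }
  set (T := iterT G (fun _ => witness M)).
  assert (hT : forall m, Ext m (T m)).
  { induction m; simpl; auto. apply hG. auto. }
  exists (fun x => T x x). intros n.
  destruct (hT (2*ky*n) n) as [t' [ht' hg]].
  apply (Good_ext n t'); auto.
  intros k hk. rewrite ht' by auto. unfold T.
  rewrite iterT_stable by auto. rewrite (iterT_stable _ _ k (slotv k)) by (unfold slotv; lia).
  reflexivity.
Qed.
Lemma final_pair (tl : nat -> car) : (forall n, Good n tl) -> infinite_empty_pair M phi kx ky.
Proof.
  intros hG.
  assert (Q : forall i j, Qsem tl i j).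
  { intros i j. apply (hG (S (Nat.max i j))); lia. }
  set (B := Btup tl). set (C := Ctup tl).
  assert (Binj : forall i j, B i = B j -> i = j).
  { intros i j h. destruct (Nat.eq_dec i j); auto. exfalso. apply (proj1 (proj2 (proj2 (proj2 (Q i j))) n)). exact h. }
  assert (Cinj : forall i j, C i = C j -> i = j).
  { intros i j h. destruct (Nat.eq_dec i j); auto. exfalso. apply (proj2 (proj2 (proj2 (proj2 (Q i j))) n)). exact h. }
  set (g := fun b => match excluded_middle_informative (exists i, b = B i) with
                     | left h => C (proj1_sig (constructive_indefinite_description _ h))
                     | right _ => b end).
  assert (hg : forall i, g (B i) = C i).
  { intro i. unfold g. destruct (excluded_middle_informative (exists i0, B i = B i0)) as [h|h].
    - destruct (constructive_indefinite_description _ h) as [j hj]. simpl.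
      apply Binj in hj. subst. reflexivity.
    - exfalso. apply h. exists i. reflexivity. }
  exists (fun b => exists i, b = B i), (fun c => exists i, c = C i).
  split; [intros b [i ->]; apply (Q i i)|].
  split; [intros c [i ->]; apply (Q i i)|].
  split.
  - exists g. split; [|split].
    + intros b [i ->]. exists i. apply hg.
    + intros b b' [i ->] [j ->]. rewrite !hg. intro h. apply Cinj in h. subst; auto.
    + intros c [i ->]. exists (B i). split; [exists i; auto| apply hg].
  - split.
    + exists B. split; [intro n; exists n; auto| exact Binj].
    + intros b c [i ->] [j ->]. apply (Q i j).
Qed.

End Phi.

Unset Implicit Arguments.
Open Scope R_scope.


Theorem mainTheorem3 (L : signature) (T : theory L) (phi : formula L)
    (kx ky : nat) (M : structure L) :
  complete T ->
  formula_in phi (kx + ky) ->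
  standing T phi kx ky ->
  is_model M T ->
  aleph1_saturated M ->
  (exists delta : R, 0 < delta < 1 /\
     forall eps : R, 0 < eps < 1 -> forall N : nat,
       exists X Y : list (list (carrier M)),
         NoDup X /\ NoDup Y /\
         (forall b, In b X -> ~ In b Y) /\
         (forall b, In b X -> P1 M phi kx ky b) /\
         (forall b, In b Y -> P1 M phi kx ky b) /\
         length X = length Y /\ (N <= length X)%nat /\
         eps_regular M phi kx ky eps X Y /\
         density M phi kx ky X Y = delta) ->
  infinite_empty_pair M phi kx ky.
Proof.
  intros _ hphi _ _ hsat hyp.
  pose proof (finite_pairs L phi kx ky M hyp) as hfp.
  assert (hky : (0 < ky)%nat).
  { destruct ky as [|k]; [|lia]. exfalso.
    destruct (hfp 2%nat) as [Xs [_ [ndX [_ [lX [_ [hX _]]]]]]].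
    destruct Xs as [|a [|b [|]]]; simpl in lX; try discriminate.
    assert (ha : a = []).
    { destruct (hX a (or_introl eq_refl)) as [hl _]. specialize (hl a (or_introl eq_refl)).
      destruct a; simpl in hl; auto; discriminate. }
    assert (hb : b = []).
    { destruct (hX b (or_intror (or_introl eq_refl))) as [hl _]. specialize (hl b (or_introl eq_refl)).
      destruct b; simpl in hl; auto; discriminate. }
    subst. inversion ndX. apply H1. left; auto. }
  destruct (construct L M phi kx ky hphi hsat (Ext0 L M phi kx ky _ hky hfp)) as [tl htl].
  exact (final_pair L M phi kx ky tl htl).
Qed.
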